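(* Let $\mathbb{P}$ be a nonlocal (non-signalling) box, and for $x,y\in\{0,1\}$ let $\eta_{x,y}:=2\,\mathbb{P}(a\oplus b=xy\mid x,y)-1=2\sum_{c\in\{0,1\}}\mathbb{P}(c,c\oplus xy\mid x,y)-1\in[-1,1]$. Define $$A:=(\eta_{0,0}+\eta_{0,1}+\eta_{1,0}+\eta_{1,1})^2,\qquad B:=2\eta_{0,0}^2+4\eta_{0,1}\eta_{1,0}+2\eta_{1,1}^2.$$ If $A+B>16$, then $\mathbb{P}$ collapses communication complexity: there exists a constant $p>1/2$ (depending only on $\mathbb{P}$) such that for all $n,m\ge 1$ and every Boolean function $f:\{0,1\}^n\times\{0,1\}^m\to\{0,1\}$, we have $\mathtt{CC}^p(f)\le 1$ when Alice and Bob are allowed arbitrarily many shared random bits and arbitrarily many copies of $\mathbb{P}$.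
   Context: A nonlocal box (NLB) is a conditional probability distribution $\mathbb{P}(a,b\mid x,y)$ on outputs $a,b\in\{0,1\}$ given inputs $x,y\in\{0,1\}$ satisfying the non-signalling conditions $\sum_{\tilde b}\mathbb{P}(a,\tilde b\mid x,0)=\sum_{\tilde b}\mathbb{P}(a,\tilde b\mid x,1)$ and $\sum_{\tilde a}\mathbb{P}(\tilde a,b\mid 0,y)=\sum_{\tilde a}\mathbb{P}(\tilde a,b\mid 1,y)$ for all $a,b,x,y$. Alice has access to the input $x$/output $a$ side and Bob to the input $y$/output $b$ side; each copy of the box can be used once, each party receiving their output immediately after inputting, regardless of the other's action. Here $\oplus$ denotes addition mod 2. Communication complexity game: given a known $f:\{0,1\}^n\times\{0,1\}^m\to\{0,1\}$, Alice receives $X\in\{0,1\}^n$ and Bob receives $Y\in\{0,1\}^m$; they are spacelike separated, may use shared randomness and copies of the box, and Bob may send communication bits to Alice; Alice must output a bit $a'$ with the goal $a'=f(X,Y)$. For $p\in[0,1]$, $\mathtt{CC}^p(f)$ is the minimal number of communication bits required so that Alice's answer is correct with probability at least $p$ for every pair $(X,Y)$. Communication complexity collapses (with respect to the allowed resources) if there exists $p>1/2$ such that $\mathtt{CC}^p(f)\le 1$ for all Boolean functions $f$. *)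

(* Defs.v *)
From HB Require Import structures.
From mathcomp Require Import all_boot all_order all_algebra.
From mathcomp Require Import reals.
Set Implicit Arguments. Unset Strict Implicit. Unset Printing Implicit Defensive.
Import Order.TTheory GRing.Theory Num.Theory.
Local Open Scope ring_scope.

(* A box: [P a b x y] = P(a,b | x,y). *)
Definition box (R : realType) := bool -> bool -> bool -> bool -> R.

Definition is_nonlocal_box (R : realType) (P : box R) : Prop :=
  (forall a b x y, 0 <= P a b x y) /\
  (forall x y, \sum_(a : bool) \sum_(b : bool) P a b x y = 1) /\
  (forall a x, \sum_(b : bool) P a b x false = \sum_(b : bool) P a b x true) /\
  (forall b y, \sum_(a : bool) P a b false y = \sum_(a : bool) P a b true y).

Definition eta (R : realType) (P : box R) (x y : bool) : R :=
  2 * (\sum_(c : bool) P c (addb c (x && y)) x y) - 1.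

Definition quantA (R : realType) (P : box R) : R :=
  (eta P false false + eta P false true + eta P true false + eta P true true) ^+ 2.

Definition quantB (R : realType) (P : box R) : R :=
  2 * eta P false false ^+ 2 + 4 * (eta P false true * eta P true false)
  + 2 * eta P true true ^+ 2.

(* Vectors of box outputs for N copies; [trunc i v] keeps only the entries
   with index < i (the outputs already obtained before using copy i). *)
Definition outvec (N : nat) := {ffun 'I_N -> bool}.
Definition trunc (N : nat) (i : nat) (v : outvec N) : outvec N :=
  [ffun j : 'I_N => if (j < i)%N then v j else false].

(* Bob uses copies 0..N-1 in order, his input to copy i depending on Y, r and
   his previous outputs; he then sends one bit to Alice, computed from Y, r
   and all his outputs.  Alice then uses copies 0..N-1 in order, her input
   to copy i depending on X, r, the received bit and her previous outputs,
   and finally outputs a bit. *)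
Record protocol (n m N k : nat) := Protocol {
  bob_in : {ffun 'I_m -> bool} -> {ffun 'I_k -> bool} -> 'I_N -> outvec N -> bool;
  bob_msg : {ffun 'I_m -> bool} -> {ffun 'I_k -> bool} -> outvec N -> bool;
  alice_in : {ffun 'I_n -> bool} -> {ffun 'I_k -> bool} -> bool -> 'I_N -> outvec N -> bool;
  alice_out : {ffun 'I_n -> bool} -> {ffun 'I_k -> bool} -> bool -> outvec N -> bool
}.

Definition success_prob (R : realType) (P : box R) (n m N k : nat)
    (f : {ffun 'I_n -> bool} -> {ffun 'I_m -> bool} -> bool)
    (pr : protocol n m N k) (X : {ffun 'I_n -> bool}) (Y : {ffun 'I_m -> bool}) : R :=
  (2 ^+ k)^-1 *
  \sum_(r : {ffun 'I_k -> bool}) \sum_(b : outvec N) \sum_(a : outvec N)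
    let c := bob_msg pr Y r b in
    (\prod_(i : 'I_N) P (a i) (b i) (alice_in pr X r c i (trunc i a))
                                     (bob_in pr Y r i (trunc i b)))
    * (if alice_out pr X r c a == f X Y then 1 else 0).

Definition CC_le_one (R : realType) (P : box R) (p : R) (n m : nat)
    (f : {ffun 'I_n -> bool} -> {ffun 'I_m -> bool} -> bool) : Prop :=
  exists (N k : nat) (pr : protocol n m N k),
    forall X Y, p <= success_prob P f pr X Y.

(* Main.v *)
Require Import Defs.
From HB Require Import structures.
From mathcomp Require Import all_boot all_order all_algebra.
From mathcomp Require Import reals.
From mathcomp Require Import ring lra.
Set Implicit Arguments. Unset Strict Implicit. Unset Printing Implicit Defensive.
Import Order.TTheory GRing.Theory Num.Theory.
Local Open Scope ring_scope.

Section Sem.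
Variable R : realType.
Variable P : box R.
Hypothesis P_ge0 : forall a b x y, 0 <= P a b x y.
Hypothesis P_sum1 : forall x y, \sum_(a : bool) \sum_(b : bool) P a b x y = 1.

Fixpoint Ex (N : nat) (xa yb : seq bool -> bool) (F : seq bool -> seq bool -> R) : R :=
  match N with
  | 0 => F [::] [::]
  | N'.+1 => \sum_(a0 : bool) \sum_(b0 : bool) (P a0 b0 (xa [::]) (yb [::]) *
       Ex N' (fun l => xa (a0 :: l)) (fun l => yb (b0 :: l))
              (fun la lb => F (a0 :: la) (b0 :: lb)))
  end.

Fixpoint Avg (k : nat) (G : seq bool -> R) : R :=
  match k with
  | 0 => G [::]
  | k'.+1 => 2^-1 * \sum_(h : bool) Avg k' (fun l => G (h :: l))
  end.

Lemma Ex_ext N xa xa' yb yb' F F' :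
  (forall l, (size l < N)%N -> xa l = xa' l) ->
  (forall l, (size l < N)%N -> yb l = yb' l) ->
  (forall a b, size a = N -> size b = N -> F a b = F' a b) ->
  Ex N xa yb F = Ex N xa' yb' F'.
Proof.
elim: N xa xa' yb yb' F F' => [|N IH] xa xa' yb yb' F F' Hx Hy HF /=.
  by apply: HF.
rewrite Hx // Hy //; apply: eq_bigr => a0 _; apply: eq_bigr => b0 _.
congr (_ * _); apply: IH.
- by move=> l Hl; apply: Hx.
- by move=> l Hl; apply: Hy.
- by move=> a b Ha Hb; apply: HF => /=; rewrite ?Ha ?Hb.
Qed.

Lemma Ex_eq N xa yb F F' :
  (forall a b, F a b = F' a b) -> Ex N xa yb F = Ex N xa yb F'.
Proof. by move=> H; apply: Ex_ext. Qed.

Lemma Ex_add N xa yb F G :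
  Ex N xa yb (fun a b => F a b + G a b) = Ex N xa yb F + Ex N xa yb G.
Proof.
elim: N xa yb F G => [|N IH] xa yb F G //=.
rewrite -big_split /=; apply: eq_bigr => a0 _.
rewrite -big_split /=; apply: eq_bigr => b0 _.
by rewrite IH mulrDr.
Qed.

Lemma Ex_scale N xa yb c F :
  Ex N xa yb (fun a b => c * F a b) = c * Ex N xa yb F.
Proof.
elim: N xa yb F => [|N IH] xa yb F //=.
rewrite mulr_sumr; apply: eq_bigr => a0 _.
rewrite mulr_sumr; apply: eq_bigr => b0 _.
by rewrite IH mulrCA.
Qed.

Lemma Ex_one N xa yb : Ex N xa yb (fun _ _ => 1) = 1.
Proof.
elim: N xa yb => [|N IH] xa yb //=.
rewrite -[RHS](P_sum1 (xa [::]) (yb [::])); apply: eq_bigr => a0 _.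
by apply: eq_bigr => b0 _; rewrite IH mulr1.
Qed.

Lemma Ex_ge0 N xa yb F : (forall a b, 0 <= F a b) -> 0 <= Ex N xa yb F.
Proof.
elim: N xa yb F => [|N IH] xa yb F HF //=.
apply: sumr_ge0 => a0 _; apply: sumr_ge0 => b0 _.
by apply: mulr_ge0 => //; apply: IH.
Qed.

Lemma Ex_cat N1 N2 xa yb F :
  Ex (N1 + N2) xa yb F =
  Ex N1 xa yb (fun a1 b1 => Ex N2 (fun l => xa (a1 ++ l)) (fun l => yb (b1 ++ l))
                       (fun a2 b2 => F (a1 ++ a2) (b1 ++ b2))).
Proof.
elim: N1 xa yb F => [|N1 IH] xa yb F //=.
apply: eq_bigr => a0 _; apply: eq_bigr => b0 _.
by rewrite IH.
Qed.

Lemma Avg_ext k G G' : (forall r, size r = k -> G r = G' r) -> Avg k G = Avg k G'.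
Proof.
elim: k G G' => [|k IH] G G' H /=; first by apply: H.
congr (_ * _); apply: eq_bigr => h _; apply: IH => r Hr.
by apply: H; rewrite /= Hr.
Qed.

Lemma Avg_eq k G G' : (forall r, G r = G' r) -> Avg k G = Avg k G'.
Proof. by move=> H; apply: Avg_ext. Qed.

Lemma Avg_add k F G : Avg k (fun r => F r + G r) = Avg k F + Avg k G.
Proof.
elim: k F G => [|k IH] F G //=.
by rewrite -mulrDr -big_split /=; congr (_ * _); apply: eq_bigr => h _; rewrite IH.
Qed.

Lemma Avg_scale k c G : Avg k (fun r => c * G r) = c * Avg k G.
Proof.
elim: k G => [|k IH] G //=.
rewrite mulr_sumr mulr_sumr mulr_sumr; apply: eq_bigr => h _.
by rewrite IH mulrCA.
Qed.

Lemma Avg_const k c : Avg k (fun _ => c) = c.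
Proof.
elim: k => [|k IH] //=.
by rewrite big_bool /= IH; field.
Qed.

Lemma Avg_ge0 k G : (forall r, 0 <= G r) -> 0 <= Avg k G.
Proof.
elim: k G => [|k IH] G HG //=.
apply: mulr_ge0; first by rewrite invr_ge0 ler0n.
by apply: sumr_ge0 => h _; apply: IH.
Qed.

Lemma Avg_cat k1 k2 G :
  Avg (k1 + k2) G = Avg k1 (fun r1 => Avg k2 (fun r2 => G (r1 ++ r2))).
Proof.
elim: k1 G => [|k1 IH] G //=.
by congr (_ * _); apply: eq_bigr => h _; rewrite IH.
Qed.

Lemma Avg_Ex k N xa yb F :
  Avg k (fun r => Ex N xa yb (F r)) = Ex N xa yb (fun a b => Avg k (fun r => F r a b)).
Proof.
elim: k F => [|k IH] F //=.
rewrite big_bool /= !IH -Ex_add -Ex_scale; apply: Ex_eq => a b.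
by rewrite big_bool.
Qed.


Definition ind (b : bool) : R := if b then 1 else 0.
Definition sgn (b : bool) : R := if b then -1 else 1.

Lemma through k N (xa yb : seq bool -> seq bool -> bool)
  (Phi : seq bool -> seq bool -> seq bool -> bool) (H : bool -> R) :
  Avg k (fun r => Ex N (xa r) (yb r) (fun a b => H (Phi r a b))) =
  \sum_(e : bool) H e * Avg k (fun r => Ex N (xa r) (yb r) (fun a b => ind (Phi r a b == e))).
Proof.
rewrite big_bool /= -!Avg_scale -Avg_add; apply: Avg_eq => r.
rewrite -!Ex_scale -Ex_add; apply: Ex_eq => a b.
by case: (Phi r a b); rewrite /ind /=; ring.
Qed.

Lemma box1 x y c :
  \sum_(o : bool) \sum_(p : bool) (P o p x y * sgn (addb c (addb o p))) =
  sgn (addb c (x && y)) * Defs.eta P x y.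
Proof.
move: (P_sum1 x y); rewrite /Defs.eta !big_bool /=.
by case: c; case: x; case: y => /= H; rewrite /sgn /=; lra.
Qed.

Lemma box2 x1 y1 x2 y2 C (G : bool -> bool -> bool -> bool -> bool) :
  (forall o1 p1 o2 p2, G o1 p1 o2 p2 = addb C (addb (addb o1 p1) (addb o2 p2))) ->
  \sum_(o1 : bool) \sum_(p1 : bool) (P o1 p1 x1 y1 *
     \sum_(o2 : bool) \sum_(p2 : bool) (P o2 p2 x2 y2 * sgn (G o1 p1 o2 p2)))
  = sgn (addb C (addb (x1 && y1) (x2 && y2))) * (Defs.eta P x1 y1 * Defs.eta P x2 y2).
Proof.
move=> HG.
transitivity ((\sum_(o1 : bool) \sum_(p1 : bool)
   (P o1 p1 x1 y1 * sgn (addb (addb C (x2 && y2)) (addb o1 p1)))) * Defs.eta P x2 y2).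
  rewrite mulr_suml; apply: eq_bigr => o1 _; rewrite mulr_suml; apply: eq_bigr => p1 _.
  rewrite -mulrA; congr (_ * _).
  transitivity (\sum_(o2 : bool) \sum_(p2 : bool)
     (P o2 p2 x2 y2 * sgn (addb (addb C (addb o1 p1)) (addb o2 p2)))).
    by apply: eq_bigr => o2 _; apply: eq_bigr => p2 _; rewrite HG addbA.
  rewrite box1; congr (_ * _); congr sgn.
  by clear HG; case: C; case: (addb o1 p1); case: (x2 && y2).
rewrite box1 mulrA; congr (_ * _ * _); congr sgn.
by clear HG; case: C; case: (x1 && y1); case: (x2 && y2).
Qed.

Lemma eta_bound x y : -1 <= Defs.eta P x y <= 1.
Proof.
move: (P_sum1 x y) (P_ge0 false false x y) (P_ge0 false true x y)
  (P_ge0 true false x y) (P_ge0 true true x y).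
rewrite /Defs.eta !big_bool /=.
by case: x; case: y => /= H1 H2 H3 H4 H5; apply/andP; split; lra.
Qed.


Definition beta (u v : bool) : R :=
  2^-1 * \sum_(s : bool) (2^-1 * \sum_(s' : bool)
     (Defs.eta P s (addb s' v) * Defs.eta P s' (addb s u))).

Definition maj (e1 e2 e3 : bool) := addb e1 ((addb e1 e2) && (addb e1 e3)).

Definition Hf (fv e1 e2 e3 : bool) : R :=
  sgn (addb (maj e1 e2 e3) fv) * beta (addb e1 e2) (addb e1 e3).

Definition bxf (s1 s2 s3 : bool) (rho l : seq bool) : bool :=
  if l is [::] then addb (addb s1 s2) (nth false rho 0)
  else addb (addb s1 s3) (nth false rho 1).
Definition byf (t1 t2 t3 : bool) (rho l : seq bool) : bool :=
  if l is [::] then addb (addb t1 t3) (nth false rho 1)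
  else addb (addb t1 t2) (nth false rho 0).
Definition faf (s1 s2 s3 : bool) (rho w : seq bool) : bool :=
  addb (addb (addb s1 ((addb (addb s1 s2) (nth false rho 0)) &&
                       (addb (addb s1 s3) (nth false rho 1))))
     (nth false w 0)) (nth false w 1).
Definition fbf (t1 t2 t3 : bool) (rho w : seq bool) : bool :=
  addb (addb (addb t1 ((addb (addb t1 t2) (nth false rho 0)) &&
                       (addb (addb t1 t3) (nth false rho 1))))
     (nth false w 0)) (nth false w 1).

Lemma shuffle s X o1 o2 t Y p1 p2 fv :
  addb (addb (addb (addb (addb s X) o1) o2) (addb (addb (addb t Y) p1) p2)) fv =
  addb (addb (addb (addb s X) (addb t Y)) fv) (addb (addb o1 p1) (addb o2 p2)).
Proof. by case: s; case: X; case: o1; case: o2; case: t; case: Y; case: p1; case: p2; case: fv. Qed.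

Lemma kernel s1 s2 s3 t1 t2 t3 fv :
  Avg 2 (fun rho => Ex 2 (bxf s1 s2 s3 rho) (byf t1 t2 t3 rho)
     (fun w v => sgn (addb (addb (faf s1 s2 s3 rho w) (fbf t1 t2 t3 rho v)) fv)))
  = Hf fv (addb s1 t1) (addb s2 t2) (addb s3 t3).
Proof.
transitivity (Avg 2 (fun rho => sgn (addb (maj (addb s1 t1) (addb s2 t2) (addb s3 t3)) fv) *
   (Defs.eta P (bxf s1 s2 s3 rho [::]) (byf t1 t2 t3 rho [::]) *
    Defs.eta P (bxf s1 s2 s3 rho [:: true]) (byf t1 t2 t3 rho [:: true])))).
  apply: Avg_ext => rho Hrho /=.
  rewrite (@box2 _ _ _ _ (addb (addb (addb s1 ((addb (addb s1 s2) (nth false rho 0)) &&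
                       (addb (addb s1 s3) (nth false rho 1))))
                (addb t1 ((addb (addb t1 t2) (nth false rho 0)) &&
                       (addb (addb t1 t3) (nth false rho 1))))) fv)); last first.
    by move=> o1 p1 o2 p2; rewrite /faf /fbf /= shuffle.
  congr (_ * _); congr sgn.
  by case: s1; case: s2; case: s3; case: t1; case: t2; case: t3; case: fv;
    case: (nth false rho 0); case: (nth false rho 1).
rewrite Avg_scale /Hf; congr (_ * _).
rewrite /beta /= !big_bool /=.
by case: s1; case: s2; case: s3; case: t1; case: t2; case: t3 => /=; ring.
Qed.


Variables (TX TY : Type).

Record DC := mkDC {
  dxa : TX -> seq bool -> seq bool -> bool;
  dyb : TY -> seq bool -> seq bool -> bool;
  dsa : TX -> seq bool -> seq bool -> bool;
  dsb : TY -> seq bool -> seq bool -> bool }.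

Definition qD (D : DC) N k X Y e :=
  Avg k (fun r => Ex N (dxa D X r) (dyb D Y r)
     (fun a b => ind (addb (dsa D X r a) (dsb D Y r b) == e))).

Definition biasD (D : DC) N k X Y fv :=
  Avg k (fun r => Ex N (dxa D X r) (dyb D Y r)
     (fun a b => sgn (addb (addb (dsa D X r a) (dsb D Y r b)) fv))).

Lemma q_sum D N k X Y : qD D N k X Y true + qD D N k X Y false = 1.
Proof.
have := through k N (dxa D X) (dyb D Y)
   (fun r a b => addb (dsa D X r a) (dsb D Y r b)) (fun _ => 1).
rewrite big_bool /= !mul1r /qD => <-.
transitivity (Avg k (fun _ => 1)); last exact: Avg_const.
by apply: Avg_eq => r; apply: Ex_one.
Qed.

Lemma bias_q D N k X Y fv :
  biasD D N k X Y fv = sgn (addb true fv) * qD D N k X Y true + sgn (addb false fv) * qD D N k X Y false.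
Proof.
have := through k N (dxa D X) (dyb D Y)
   (fun r a b => addb (dsa D X r a) (dsb D Y r b)) (fun e => sgn (addb e fv)).
by rewrite big_bool /=.
Qed.

Lemma q_ge0 D N k X Y e : 0 <= qD D N k X Y e.
Proof.
apply: Avg_ge0 => r; apply: Ex_ge0 => a b; rewrite /ind; by case: (_ == _).
Qed.

Definition node N k (D : DC) : DC := mkDC
  (fun X r l =>
    if (size l < N)%N then dxa D X (take k r) l
    else if (size (drop N l) < N)%N then dxa D X (take k (drop k r)) (drop N l)
    else if (size (drop N (drop N l)) < N)%N then
      dxa D X (take k (drop k (drop k r))) (drop N (drop N l))
    else bxf (dsa D X (take k r) (take N l))
             (dsa D X (take k (drop k r)) (take N (drop N l)))
             (dsa D X (take k (drop k (drop k r))) (take N (drop N (drop N l))))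
             (drop k (drop k (drop k r))) (drop N (drop N (drop N l))))
  (fun Y r l =>
    if (size l < N)%N then dyb D Y (take k r) l
    else if (size (drop N l) < N)%N then dyb D Y (take k (drop k r)) (drop N l)
    else if (size (drop N (drop N l)) < N)%N then
      dyb D Y (take k (drop k (drop k r))) (drop N (drop N l))
    else byf (dsb D Y (take k r) (take N l))
             (dsb D Y (take k (drop k r)) (take N (drop N l)))
             (dsb D Y (take k (drop k (drop k r))) (take N (drop N (drop N l))))
             (drop k (drop k (drop k r))) (drop N (drop N (drop N l))))
  (fun X r l =>
     faf (dsa D X (take k r) (take N l))
         (dsa D X (take k (drop k r)) (take N (drop N l)))
         (dsa D X (take k (drop k (drop k r))) (take N (drop N (drop N l))))
         (drop k (drop k (drop k r))) (drop N (drop N (drop N l))))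
  (fun Y r l =>
     fbf (dsb D Y (take k r) (take N l))
         (dsb D Y (take k (drop k r)) (take N (drop N l)))
         (dsb D Y (take k (drop k (drop k r))) (take N (drop N (drop N l))))
         (drop k (drop k (drop k r))) (drop N (drop N (drop N l)))).

Lemma size_cat_ltF (a l : seq bool) N : size a = N -> (size (a ++ l) < N)%N = false.
Proof. by move=> Ha; rewrite size_cat Ha ltnNge leq_addr. Qed.

Ltac dsimp := repeat (first [ rewrite size_cat_ltF; [|by []] | rewrite drop_size_cat; [|by []] | rewrite take_size_cat; [|by []] ]).

Lemma node_canon N k D X Y fv :
  biasD (node N k D) (N + (N + (N + 2))) (k + (k + (k + 2))) X Y fv =
  Avg k (fun r1 => Avg k (fun r2 => Avg k (fun r3 => Avg 2 (fun rho =>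
   Ex N (dxa D X r1) (dyb D Y r1) (fun a1 b1 =>
   Ex N (dxa D X r2) (dyb D Y r2) (fun a2 b2 =>
   Ex N (dxa D X r3) (dyb D Y r3) (fun a3 b3 =>
   Ex 2 (bxf (dsa D X r1 a1) (dsa D X r2 a2) (dsa D X r3 a3) rho)
        (byf (dsb D Y r1 b1) (dsb D Y r2 b2) (dsb D Y r3 b3) rho)
        (fun w v => sgn (addb (addb (faf (dsa D X r1 a1) (dsa D X r2 a2) (dsa D X r3 a3) rho w)
                                    (fbf (dsb D Y r1 b1) (dsb D Y r2 b2) (dsb D Y r3 b3) rho v)) fv))))))))).
Proof.
rewrite /biasD Avg_cat; apply: Avg_ext => r1 Hr1.
rewrite Avg_cat; apply: Avg_ext => r2 Hr2.
rewrite Avg_cat; apply: Avg_ext => r3 Hr3.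
apply: Avg_ext => rho Hrho.
rewrite Ex_cat; apply: Ex_ext => [l Hl|l Hl|a1 b1 Ha1 Hb1].
- by rewrite /= Hl; dsimp.
- by rewrite /= Hl; dsimp.
rewrite Ex_cat; apply: Ex_ext => [l Hl|l Hl|a2 b2 Ha2 Hb2].
- by rewrite /=; dsimp; rewrite Hl; dsimp.
- by rewrite /=; dsimp; rewrite Hl; dsimp.
rewrite Ex_cat; apply: Ex_ext => [l Hl|l Hl|a3 b3 Ha3 Hb3].
- by rewrite /=; dsimp; rewrite Hl; dsimp.
- by rewrite /=; dsimp; rewrite Hl; dsimp.
apply: Ex_ext => [l Hl|l Hl|w v Hw Hv] /=.
- by dsimp.
- by dsimp.
by dsimp.
Qed.


Lemma node_bias N k D X Y fv :
  biasD (node N k D) (N + (N + (N + 2))) (k + (k + (k + 2))) X Y fv =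
  \sum_(e1 : bool) (\sum_(e2 : bool) (\sum_(e3 : bool)
      Hf fv e1 e2 e3 * qD D N k X Y e3) * qD D N k X Y e2) * qD D N k X Y e1.
Proof.
rewrite node_canon.
transitivity (Avg k (fun r1 => Ex N (dxa D X r1) (dyb D Y r1) (fun a1 b1 =>
   Avg k (fun r2 => Ex N (dxa D X r2) (dyb D Y r2) (fun a2 b2 =>
   Avg k (fun r3 => Ex N (dxa D X r3) (dyb D Y r3) (fun a3 b3 =>
     Hf fv (addb (dsa D X r1 a1) (dsb D Y r1 b1)) (addb (dsa D X r2 a2) (dsb D Y r2 b2))
           (addb (dsa D X r3 a3) (dsb D Y r3 b3))))))))).
  apply: Avg_eq => r1.
  under Avg_eq => r2 do under Avg_eq => r3 do rewrite Avg_Ex.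
  under Avg_eq => r2 do rewrite Avg_Ex.
  rewrite Avg_Ex; apply: Ex_eq => a1 b1.
  apply: Avg_eq => r2.
  under Avg_eq => r3 do rewrite Avg_Ex.
  rewrite Avg_Ex; apply: Ex_eq => a2 b2.
  apply: Avg_eq => r3.
  rewrite Avg_Ex; apply: Ex_eq => a3 b3.
  exact: kernel.
etransitivity.
  exact: (through k N (dxa D X) (dyb D Y) (fun r a b => addb (dsa D X r a) (dsb D Y r b))
    (fun z1 => Avg k (fun r2 => Ex N (dxa D X r2) (dyb D Y r2) (fun a2 b2 =>
       Avg k (fun r3 => Ex N (dxa D X r3) (dyb D Y r3) (fun a3 b3 =>
         Hf fv z1 (addb (dsa D X r2 a2) (dsb D Y r2 b2)) (addb (dsa D X r3 a3) (dsb D Y r3 b3)))))))).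
apply: eq_bigr => e1 _; congr (_ * _).
etransitivity.
  exact: (through k N (dxa D X) (dyb D Y) (fun r a b => addb (dsa D X r a) (dsb D Y r b))
    (fun z2 => Avg k (fun r3 => Ex N (dxa D X r3) (dyb D Y r3) (fun a3 b3 =>
         Hf fv e1 z2 (addb (dsa D X r3 a3) (dsb D Y r3 b3)))))).
apply: eq_bigr => e2 _; congr (_ * _).
exact: (through k N (dxa D X) (dyb D Y) (fun r a b => addb (dsa D X r a) (dsb D Y r b))
    (fun z3 => Hf fv e1 e2 z3)).
Qed.


Definition b00 := beta false false.
Definition Ssum := beta true false + beta false true + beta true true.
Definition Gf (d : R) := d * (b00 + (Ssum - b00) * ((1 - d ^+ 2) / 4%:R)).

Lemma bias_bound D N k X Y fv : -1 <= biasD D N k X Y fv <= 1.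
Proof.
rewrite bias_q; have := q_sum D N k X Y; have := q_ge0 D N k X Y true;
have := q_ge0 D N k X Y false.
by case: fv; rewrite /sgn /= => H1 H2 H3; apply/andP; split; lra.
Qed.

Lemma rec_alg fv (q : bool -> R) : q true + q false = 1 ->
  \sum_(e1 : bool) (\sum_(e2 : bool) (\sum_(e3 : bool) Hf fv e1 e2 e3 * q e3) * q e2) * q e1
  = Gf (sgn (addb true fv) * q true + sgn (addb false fv) * q false).
Proof.
move=> Hs; rewrite /Gf /b00 /Ssum /Hf /maj !big_bool.
have -> : q true = 1 - q false by lra.
case: fv; rewrite /sgn /=;
move: (q false) (beta false false) (beta false true) (beta true false)
  (beta true true) => q0 c00 c01 c10 c11; by field.
Qed.

Lemma node_rec N k D X Y fv :
  biasD (node N k D) (N + (N + (N + 2))) (k + (k + (k + 2))) X Y fv =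
  Gf (biasD D N k X Y fv).
Proof.
rewrite node_bias bias_q; apply: rec_alg; exact: q_sum.
Qed.

Lemma avg_ind (L : seq bool) : Avg (size L) (fun r => ind (r == L)) = (2^-1) ^+ (size L).
Proof.
elim: L => [|x L IH] //=.
have E : forall h, Avg (size L) (fun l => ind (h :: l == x :: L)) =
                   if h == x then (2^-1) ^+ (size L) else 0.
  move=> h; case: (eqVneq h x) => [->|hx].
    by rewrite -IH; apply: Avg_eq => l; rewrite eqseq_cons eqxx.
  rewrite -(Avg_const (size L) 0); apply: Avg_eq => l.
  by rewrite eqseq_cons (negbTE hx).
rewrite big_bool !E exprS; clear E; case: x => /=; ring.
Qed.

Definition leaf (m : nat) (fA : TX -> seq bool -> bool) (codeY : TY -> seq bool) : DC :=
  mkDC (fun _ _ _ => false) (fun _ _ _ => false)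
    (fun X r _ => addb (fA X (take m r)) (nth false (drop m r) 0))
    (fun Y r _ => if take m r == codeY Y then nth false (drop m r) 0
                  else addb (nth false (drop m r) 0) (nth false (drop m r) 1)).

Lemma leaf_bias m fA codeY X Y fv :
  size (codeY Y) = m -> fA X (codeY Y) = fv ->
  biasD (leaf m fA codeY) 0 (m + 2) X Y fv = (2^-1) ^+ m.
Proof.
move=> Hs Hf0; rewrite /biasD Avg_cat.
transitivity (Avg m (fun r => ind (r == codeY Y))); last by move: (avg_ind (codeY Y)); rewrite Hs.
apply: Avg_ext => r0 Hr0.
rewrite /= !big_bool /= !take_size_cat // !drop_size_cat //=.
case: (eqVneq r0 (codeY Y)) => [E|E].
  rewrite E Hf0 /ind; clear Hf0.
  by case: fv; rewrite /sgn /=; field.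
rewrite /ind; clear Hf0.
by case: (fA X r0); case: fv; rewrite /sgn /=; field.
Qed.

End Sem.

Section Bridge.
Variable R : realType.
Variable P : box R.

Definition fl N (v : {ffun 'I_N -> bool}) : seq bool := [seq v j | j <- enum 'I_N].
Definition fcons N (h : bool) (t : {ffun 'I_N -> bool}) : {ffun 'I_N.+1 -> bool} :=
  [ffun j => if unlift ord0 j is Some j' then t j' else h].

Lemma fl_fcons N h (t : {ffun 'I_N -> bool}) : fl (fcons h t) = h :: fl t.
Proof.
rewrite /fl enum_ordSl /= ffunE unlift_none -map_comp; congr cons.
by apply: eq_map => j /=; rewrite ffunE liftK.
Qed.

Lemma size_fl N (v : {ffun 'I_N -> bool}) : size (fl v) = N.
Proof. by rewrite size_map size_enum_ord. Qed.

Lemma sum_ffunS N (G : {ffun 'I_N.+1 -> bool} -> R) :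
  \sum_(v : {ffun 'I_N.+1 -> bool}) G v =
  \sum_(h : bool) \sum_(t : {ffun 'I_N -> bool}) G (fcons h t).
Proof.
rewrite pair_big /=.
rewrite (reindex (fun p : bool * {ffun 'I_N -> bool} => fcons p.1 p.2)) //=.
exists (fun v => (v ord0, [ffun j => v (lift ord0 j)])) => [[h t] _|v _] /=.
  rewrite /fcons ffunE unlift_none; congr pair; apply/ffunP => j.
  by rewrite !ffunE liftK.
apply/ffunP => j; rewrite /fcons ffunE; case: unliftP => [j' ->|->]; by rewrite ?ffunE.
Qed.

Lemma sum_ffun0 (G : {ffun 'I_0 -> bool} -> R) :
  \sum_(v : {ffun 'I_0 -> bool}) G v = G [ffun => false].
Proof.
rewrite (big_pred1 [ffun => false]) // => v /=.
by apply/esym/eqP/ffunP => -[].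
Qed.

Lemma fl0 (v : {ffun 'I_0 -> bool}) : fl v = [::].
Proof. by apply/size0nil; rewrite size_fl. Qed.

Lemma nth_fl N (v : {ffun 'I_N -> bool}) (j : 'I_N) : nth false (fl v) j = v j.
Proof. by rewrite /fl (nth_map j) ?size_enum_ord // nth_ord_enum. Qed.

Lemma take_trunc N i (v : {ffun 'I_N -> bool}) : take i (fl (trunc i v)) = take i (fl v).
Proof.
apply: (@eq_from_nth _ false); first by rewrite !size_take !size_fl.
move=> q; rewrite size_take size_fl => Hq.
have Hqi : (q < i)%N by move: Hq; case: ifP => // /negbT; rewrite -leqNgt => H1 H2; apply: leq_trans H2 _.
have HqN : (q < N)%N by move: Hq; case: ifP => // H1 H2; apply: ltn_trans H2 H1.
rewrite !nth_take //.
pose j := Ordinal HqN; have -> : q = j by [].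
by rewrite !nth_fl ffunE /= Hqi.
Qed.

Lemma bridge N xa yb (F : seq bool -> seq bool -> R) :
  \sum_(b : {ffun 'I_N -> bool}) \sum_(a : {ffun 'I_N -> bool})
    ((\prod_(i : 'I_N) P (a i) (b i) (xa (take i (fl a))) (yb (take i (fl b)))) * F (fl a) (fl b))
  = Ex P N xa yb F.
Proof.
elim: N xa yb F => [|N IH] xa yb F.
  by rewrite !sum_ffun0 big_ord0 mul1r !fl0.
transitivity (\sum_(hb : bool) \sum_(tb : {ffun 'I_N -> bool}) \sum_(ha : bool)
   \sum_(ta : {ffun 'I_N -> bool}) (P ha hb (xa [::]) (yb [::]) *
   ((\prod_(i : 'I_N) P (ta i) (tb i) (xa (ha :: take i (fl ta))) (yb (hb :: take i (fl tb))))
     * F (ha :: fl ta) (hb :: fl tb)))).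
  rewrite sum_ffunS; apply: eq_bigr => hb _; apply: eq_bigr => tb _.
  rewrite sum_ffunS; apply: eq_bigr => ha _; apply: eq_bigr => ta _.
  rewrite big_ord_recl !fl_fcons !ffunE unlift_none mulrA; congr (_ * _ * _).
  apply: eq_bigr => i _; rewrite !ffunE liftK lift0 //.
under eq_bigr => hb _ do rewrite exchange_big.
rewrite exchange_big /=; apply: eq_bigr => ha _; apply: eq_bigr => hb _.
rewrite -IH mulr_sumr; apply: eq_bigr => tb _; rewrite mulr_sumr.
by apply: eq_bigr => ta _.
Qed.

Lemma bridge_coin k (G : seq bool -> R) :
  (2 ^+ k)^-1 * \sum_(r : {ffun 'I_k -> bool}) G (fl r) = Avg k G.
Proof.
elim: k G => [|k IH] G.
  by rewrite sum_ffun0 expr0 invr1 mul1r fl0.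
rewrite sum_ffunS /= exprS invfM -mulrA mulr_sumr; congr (_ * _).
apply: eq_bigr => h _; rewrite -(IH (fun l => G (h :: l))); congr (_ * _).
by apply: eq_bigr => t _; rewrite fl_fcons.
Qed.

End Bridge.

Lemma growth_abs (R : realType) (b S : R) : 0 < b -> 1 < b + (S - b) / 4%:R ->
  exists kap c : R, 1 < kap /\ 0 < c /\ forall d, 0 < d <= 1 ->
    c <= d * (b + (S - b) * ((1 - d ^+ 2) / 4%:R)) \/
    kap * d <= d * (b + (S - b) * ((1 - d ^+ 2) / 4%:R)).
Proof.
move=> Hb Hh.
pose h := b + (S - b) / 4%:R.
have E : forall d : R, b + (S - b) * ((1 - d ^+ 2) / 4%:R) = h - d ^+ 2 * (h - b).
  by move=> d; rewrite /h; field.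
have Hh' : 1 < h by [].
pose d1 := (h - 1) / 2%:R / (h + b + 1).
pose mu := b / (b + 1).
have Hd1p : 0 < d1 by rewrite /d1; apply: divr_gt0; [apply: divr_gt0|]; lra.
have Hd1e : d1 * (h + b + 1) = h - (1 + h) / 2%:R.
  rewrite /d1; field; lra.
have Hmup : 0 < mu by rewrite /mu; apply: divr_gt0; lra.
have Hmu1 : mu * (b + 1) = b by rewrite /mu; field; lra.
have Hmu2 : mu <= 1 by rewrite /mu ler_pdivrMr; lra.
have Hmu3 : mu <= b by nra.
exists ((1 + h) / 2%:R), (d1 * mu); split; first lra.
split; first exact: mulr_gt0.
move=> d /andP[Hd0 Hd1]; rewrite E.
have Hd2 : d ^+ 2 <= d by rewrite expr2; nra.
have Hd20 : 0 <= d ^+ 2 by rewrite expr2; nra.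
case: (lerP d d1) => Hdd.
  right.
  have H1 : d ^+ 2 * (h - b) <= h - (1 + h) / 2%:R.
    rewrite -Hd1e.
    case: (lerP (h - b) 0) => Hhb; first by nra.
    have : d ^+ 2 <= d1 by lra.
    nra.
  nra.
left.
have H2 : mu <= h - d ^+ 2 * (h - b).
  have -> : h - d ^+ 2 * (h - b) = h * (1 - d ^+ 2) + b * d ^+ 2 by ring.
  nra.
nra.
Qed.

Lemma bern (R : realType) (kap : R) (D : nat) : 1 <= kap -> 1 + D%:R * (kap - 1) <= kap ^+ D.
Proof.
move=> Hk; elim: D => [|D IH]; first by rewrite expr0 mul0r addr0.
rewrite exprS -addn1 natrD.
have HD := ler0n R D.
have H1 : kap * (1 + D%:R * (kap - 1)) <= kap * kap ^+ D.
  by rewrite ler_wpM2l //; lra.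
have H2 : 0 <= D%:R * (kap - 1) * (kap - 1).
  by apply: mulr_ge0; [apply: mulr_ge0|]; lra.
nra.
Qed.

Section Main.
Variables (R : realType) (P : box R).
Hypothesis Hge0 : forall a b x y, 0 <= P a b x y.
Hypothesis Hsum : forall x y, \sum_(a : bool) \sum_(b : bool) P a b x y = 1.

Lemma b00_eq : b00 P = quantB P / 8%:R.
Proof. by rewrite /b00 /beta /quantB !big_bool /=; field. Qed.

Lemma Ssum_eq : Ssum P = quantA P / 4%:R - quantB P / 8%:R.
Proof. by rewrite /Ssum /beta /quantA /quantB !big_bool /=; field. Qed.

Lemma A_le16 : quantA P <= 16%:R.
Proof.
have := eta_bound Hge0 Hsum false false; have := eta_bound Hge0 Hsum false true.
have := eta_bound Hge0 Hsum true false; have := eta_bound Hge0 Hsum true true.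
rewrite /quantA.
move: (Defs.eta P false false) (Defs.eta P false true) (Defs.eta P true false) (Defs.eta P true true).
move=> e1 e2 e3 e4 /andP[H1 H2] /andP[H3 H4] /andP[H5 H6] /andP[H7 H8].
rewrite expr2; nra.
Qed.

Lemma growth : 16%:R < quantA P + quantB P ->
  exists kap c : R, 1 < kap /\ 0 < c /\ forall d, 0 < d <= 1 ->
    c <= Gf P d \/ kap * d <= Gf P d.
Proof.
move=> HAB; apply: growth_abs.
  rewrite b00_eq; have := A_le16; lra.
rewrite b00_eq Ssum_eq; lra.
Qed.

End Main.

Section Tree.
Variables (n m : nat) (f : {ffun 'I_n -> bool} -> {ffun 'I_m -> bool} -> bool).

Definition l2f (l : seq bool) : {ffun 'I_m -> bool} := [ffun j : 'I_m => nth false l j].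

Lemma l2f_fl (Y : {ffun 'I_m -> bool}) : l2f (fl Y) = Y.
Proof. by apply/ffunP => j; rewrite ffunE nth_fl. Qed.

Definition leafD : DC {ffun 'I_n -> bool} {ffun 'I_m -> bool} :=
  leaf m (fun X l => f X (l2f l)) (fun Y => fl Y).

Fixpoint Nd d := if d is d'.+1 then (Nd d' + (Nd d' + (Nd d' + 2)))%N else 0%N.
Fixpoint kd d := if d is d'.+1 then (kd d' + (kd d' + (kd d' + 2)))%N else (m + 2)%N.
Fixpoint tree d := if d is d'.+1 then node (Nd d') (kd d') (tree d') else leafD.

Definition mkprot (D : DC {ffun 'I_n -> bool} {ffun 'I_m -> bool}) N k : protocol n m N k :=
  Protocol (fun Y r i v => dyb D Y (fl r) (take i (fl v)))
           (fun Y r b => dsb D Y (fl r) (fl b))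
           (fun X r c i v => dxa D X (fl r) (take i (fl v)))
           (fun X r c a => addb (dsa D X (fl r) (fl a)) c).

Variables (R : realType) (P : box R).

Lemma succ_eq D N k X Y :
  success_prob P f (mkprot D N k) X Y = qD P D N k X Y (f X Y).
Proof.
rewrite /success_prob /qD /= -bridge_coin; congr (_ * _).
apply: eq_bigr => r _; rewrite -bridge; apply: eq_bigr => b _; apply: eq_bigr => a _.
congr (_ * _); apply: eq_bigr => i _; by rewrite !take_trunc.
Qed.

Lemma tree0 X Y : biasD P (tree 0) (Nd 0) (kd 0) X Y (f X Y) = (2^-1) ^+ m.
Proof. by apply: leaf_bias; rewrite ?size_fl ?l2f_fl. Qed.

End Tree.

Theorem theorem1 (R : realType) (P : box R) :
  is_nonlocal_box P ->
  16 < quantA P + quantB P ->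
  exists p : R, 2^-1 < p /\
    forall (n m : nat), (0 < n)%N -> (0 < m)%N ->
    forall f : {ffun 'I_n -> bool} -> {ffun 'I_m -> bool} -> bool,
      CC_le_one P p f.
Proof.
move=> [Hge0 [Hsum _]] HAB.
have [kap [c [Hk [Hc Hg]]]] := growth Hge0 Hsum HAB.
exists ((1 + c) / 2%:R); split; first lra.
move=> n m _ _ f.
pose x := c * 2%:R ^+ m / (kap - 1).
have Hx : 0 <= x by rewrite /x; apply: divr_ge0; [apply: mulr_ge0; [lra|apply: exprn_ge0]|lra].
pose Dd := Num.Def.archi_bound x.
have HD : x < Dd%:R by apply: archi_boundP.
exists (Nd Dd), (kd m Dd), (mkprot (tree f Dd) (Nd Dd) (kd m Dd)) => X Y.
rewrite succ_eq.
set del := fun d => biasD P (tree f d) (Nd d) (kd m d) X Y (f X Y).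
have Hinv : forall d, c <= del d \/ kap ^+ d * (2^-1) ^+ m <= del d.
  elim=> [|d IH].
    by right; rewrite expr0 mul1r /del tree0.
  have Hrec : del d.+1 = Gf P (del d) by rewrite /del /= (node_rec Hsum).
  have Hpos : 0 < del d.
    case: IH => IH; first lra.
    apply: lt_le_trans IH; apply: mulr_gt0; apply: exprn_gt0; lra.
  have Hle1 : del d <= 1 by have /andP[] := bias_bound Hge0 Hsum (tree f d) (Nd d) (kd m d) X Y (f X Y).
  rewrite Hrec.
  have [G1|G2] := Hg (del d) (introT andP (conj Hpos Hle1)).
    by left.
  case: IH => IH.
    left; nra.
  right; rewrite exprS -mulrA; nra.
have HDc : c <= kap ^+ Dd * (2^-1) ^+ m.
  have Hb := bern Dd (ltW Hk).
  have H2m : 0 < (2%:R : R) ^+ m by apply: exprn_gt0.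
  have Hinvm : (2^-1 : R) ^+ m * 2%:R ^+ m = 1 by rewrite -exprMn mulVf ?expr1n // pnatr_eq0.
  have : c * 2%:R ^+ m < Dd%:R * (kap - 1).
    by move: HD; rewrite /x ltr_pdivrMr; lra.
  move=> H3.
  have Ht : 0 < (2^-1 : R) ^+ m by apply: exprn_gt0; rewrite invr_gt0; lra.
  have H4 : c * 2%:R ^+ m < kap ^+ Dd by lra.
  have H5 : (c * 2%:R ^+ m) * (2^-1) ^+ m < kap ^+ Dd * (2^-1) ^+ m by rewrite ltr_pM2r.
  have H6 : (c * 2%:R ^+ m) * (2^-1) ^+ m = c by rewrite -mulrA [2%:R ^+ m * _]mulrC Hinvm mulr1.
  lra.
have Hfin : c <= del Dd by case: (Hinv Dd) => H; lra.
have := bias_q P (tree f Dd) (Nd Dd) (kd m Dd) X Y (f X Y).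
have := q_sum Hsum (tree f Dd) (Nd Dd) (kd m Dd) X Y.
rewrite -/(del Dd).
case: (f X Y); rewrite /sgn /= => H1 H2; lra.
Qed.
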